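(* For every integer $n\ge 2$, the friendship graph $F_n$ is not $\mathcal{D}$-unique. Specifically, let $H_n$ be the graph on vertices $u,a_1,\dots,a_n,b_1,\dots,b_n$ with edges $ua_i$, $ub_i$, $a_ib_i$ for $1\le i\le n$, and $b_ib_j$ for all $1\le i<j\le n$ (this is $B_n/v$, the contraction of the book graph $B_n$ at an endpoint $v$ of its common edge). Then $H_n$ is not isomorphic to $F_n$, but $D(H_n,x)=D(F_n,x)=(2x+x^2)^n+x(1+x)^{2n}$. *)

(* Defs.v *)
From HB Require Import structures.
From mathcomp Require Import all_boot all_order all_algebra.
Set Implicit Arguments. Unset Strict Implicit. Unset Printing Implicit Defensive.
Import Order.TTheory GRing.Theory Num.Theory.

(* A simple graph on a finite vertex type T is given by an adjacency relation
   e : rel T (symmetric and irreflexive for the graphs below). *)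

Definition dominating (T : finType) (e : rel T) (S : {set T}) : bool :=
  [forall v, (v \in S) || [exists w in S, e v w]].

Definition dom_poly (T : finType) (e : rel T) : {poly int} :=
  (\sum_(S : {set T} | dominating e S) 'X^#|S|)%R.

Definition isomorphic (T1 T2 : finType) (e1 : rel T1) (e2 : rel T2) : Prop :=
  exists f : T1 -> T2, bijective f /\ forall x y, e1 x y = e2 (f x) (f y).

(* Vertex set {u, a_1..a_n, b_1..b_n}:
   None = u, Some (i, false) = a_i, Some (i, true) = b_i. *)
Definition vtx (n : nat) : finType := option ('I_n * bool)%type.

Definition friendship (n : nat) : rel (vtx n) := fun x y =>
  match x, y with
  | None, None => false
  | None, Some _ | Some _, None => true
  | Some (i, b), Some (j, c) => (i == j) && (b != c)
  end.

Definition Hgraph (n : nat) : rel (vtx n) := fun x y =>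
  match x, y with
  | None, None => false
  | None, Some _ | Some _, None => true
  | Some (i, b), Some (j, c) => ((i == j) && (b != c)) || [&& b, c & i != j]
  end.

Arguments friendship n : clear implicits.
Arguments Hgraph n : clear implicits.

(* Main.v *)
Require Import Defs.
From HB Require Import structures.
From mathcomp Require Import all_boot all_order all_algebra.
From mathcomp Require Import ring.
Import GRing.Theory.
Local Open Scope ring_scope.

Lemma prod_option (T : finType) (F : option T -> {poly int}) :
  \prod_(v : option T) F v = F None * \prod_(x : T) F (Some x).
Proof.
rewrite (bigD1 None) //=; congr (_ * _).
rewrite (reindex_omap Some (fun v => v)); last by case.
by apply: eq_bigl => x /=; rewrite eqxx.
Qed.

Section S.
Variable n : nat.

Definition enc (p : bool * {ffun 'I_n -> bool * bool}) : {set vtx n} :=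
  [set v | match v with None => p.1
           | Some (i, b) => if b then (p.2 i).2 else (p.2 i).1 end].
Definition dec (S : {set vtx n}) : bool * {ffun 'I_n -> bool * bool} :=
  (None \in S, [ffun i => (Some (i, false) \in S, Some (i, true) \in S)]).

Lemma decK : cancel dec enc.
Proof. by move=> S; apply/setP => -[[i []]|]; rewrite inE //= ffunE. Qed.
Lemma encK : cancel enc dec.
Proof.
move=> [c f]; rewrite /dec inE /=; congr pair; apply/ffunP => i.
by rewrite ffunE !inE /=; case: (f i).
Qed.

Definition w (b : bool) : {poly int} := if b then 'X else 1.

Lemma Xcard p : 'X ^+ #|enc p| = w p.1 * \prod_i (w (p.2 i).2 * w (p.2 i).1).
Proof.
rewrite -prodr_const big_mkcond /= prod_option inE /=; congr (_ * _).
rewrite [RHS](eq_bigr (fun i => \prod_(b : bool) if Some (i, b) \in enc p then 'X else 1)); last first.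
  by move=> i _; rewrite big_bool /= !inE /= /w; case: (p.2 i) => [[] []].
by rewrite pair_big; apply: eq_big => -[i b].
Qed.

Lemma domF p : (0 < n)%N ->
  dominating (friendship n) (enc p) = p.1 || [forall i, (p.2 i).1 || (p.2 i).2].
Proof.
move=> n0; rewrite /dominating; case: p => c f /=; case: c => /=.
  apply/forallP => -[v|]; last by rewrite inE.
  apply/orP; right; apply/existsP; exists None; rewrite inE; by case: v.
apply/idP/idP => /forallP H; apply/forallP.
  move=> i; move: (H (Some (i, false))) => /orP [|/existsP [[[j d]|]]];
    rewrite !inE //=.
  - by move=> ->.
  - case: d => /and3P [h /eqP ij //] _; by rewrite ij h orbT.
move=> [[i b]|].
  rewrite inE /=; move: (H i); case: b => /=.
    by case/orP => h; rewrite ?h //; apply/orP; right; apply/existsP;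
    exists (Some (i, false)); rewrite inE /= h eqxx /=.
  by case/orP => h; rewrite ?h //; apply/orP; right; apply/existsP;
    exists (Some (i, true)); rewrite inE /= h eqxx /=.
apply/orP; right; apply/existsP.
have i0 : 'I_n := Ordinal n0.
case/orP: (H i0) => h; [exists (Some (i0, false)) | exists (Some (i0, true))];
  by rewrite inE /= h.
Qed.

Lemma domHF S : (0 < n)%N ->
  dominating (Hgraph n) S = dominating (friendship n) S.
Proof.
move=> n0; apply/idP/idP.
  move=> /forallP H; rewrite -[S]decK domF // /dec /=.
  case: (boolP (None \in S)) => //= uS; apply/forallP => i; rewrite ffunE /=.
  case/orP: (H (Some (i, false))) => [->//|/existsP [[[j c]|] /andP [wS e]]];
    last by rewrite wS in uS.
  move: e => /=; rewrite orbF; case/andP => /eqP ij; rewrite -ij in wS; case: c wS => // ->.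
  by rewrite orbT.
move=> /forallP H; apply/forallP => v; case/orP: (H v) => [->//|].
case/existsP => w /andP [wS e]; apply/orP; right; apply/existsP; exists w.
rewrite wS /=; move: e; case: v => [[i b]|]; case: w {wS} => [[j c]|] //= ->.
by [].
Qed.

Lemma three (f : vtx n -> vtx n) (finj : injective f) x y1 y2 y3 :
  y1 != y2 -> y1 != y3 -> y2 != y3 ->
  friendship n (f x) (f y1) -> friendship n (f x) (f y2) ->
  friendship n (f x) (f y3) -> f x = None.
Proof.
move=> /eqP n12 /eqP n13 /eqP n23.
case: (f x) => [[i b]|] // h1 h2 h3.
have P b0 z : friendship n (Some (i, b0)) z -> z = None \/ z = Some (i, ~~ b0).
  case: z => [[j c]|] /=; last by left.
  by case/andP => /eqP <-; case: b0 c => [] [] //= _; right.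
exfalso.
case: (P _ _ h1) => e1; case: (P _ _ h2) => e2; case: (P _ _ h3) => e3;
  first [by apply: n12; apply: finj; congruence | by apply: n13; apply: finj; congruence | by apply: n23; apply: finj; congruence].
Qed.

Lemma sum_bb (G : bool -> bool -> {poly int}) :
  \sum_(q : bool * bool) G q.1 q.2 = G true true + G true false + G false true + G false false.
Proof. by rewrite -(pair_big xpredT xpredT) /= !big_bool /= addrA. Qed.

End S.

Theorem mainTheorem7 (n : nat) (hn : (2 <= n)%N) :
  ~ isomorphic (Hgraph n) (friendship n) /\
  dom_poly (Hgraph n) = dom_poly (friendship n) /\
  dom_poly (friendship n) = ('X *+ 2 + 'X ^+ 2) ^+ n + 'X * (1 + 'X) ^+ (2 * n).
Proof.
have n0 : (0 < n)%N by apply: leq_trans hn.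
split.
  move=> [f [fbij fe]].
  have finj := bij_inj fbij.
  pose i0 : 'I_n := Ordinal n0.
  pose i1 : 'I_n := Ordinal hn.
  have A : f None = None.
    apply: (@three n f finj None (Some (i0, false)) (Some (i0, true))
       (Some (i1, false))) => //; by rewrite -fe.
  have B : f (Some (i0, true)) = None.
    apply: (@three n f finj (Some (i0, true)) None (Some (i0, false))
       (Some (i1, true))) => //; by rewrite -fe.
  by have := finj _ _ (etrans A (esym B)).
split.
  by rewrite /dom_poly; apply: eq_bigl => S; rewrite domHF.
rewrite /dom_poly (reindex (@enc n)) /=; last first.
  by apply: onW_bij; exists (@dec n); [exact: encK | exact: decK].
rewrite (eq_bigl (fun p : bool * {ffun 'I_n -> bool * bool} => p.1 || [forall i, (p.2 i).1 || (p.2 i).2])); last first.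
  by move=> p; rewrite domF.
rewrite (eq_bigr (fun p : bool * {ffun 'I_n -> bool * bool} => w p.1 * \prod_i (w (p.2 i).2 * w (p.2 i).1))); last first.
  by move=> p _; rewrite Xcard.
rewrite big_mkcond.
have -> : \sum_(p : bool * {ffun 'I_n -> bool * bool})
    (if p.1 || [forall i, (p.2 i).1 || (p.2 i).2]
     then w p.1 * \prod_i (w (p.2 i).2 * w (p.2 i).1) else 0) =
  \sum_(c : bool) \sum_(f : {ffun 'I_n -> bool * bool})
    (if c || [forall i, (f i).1 || (f i).2]
     then w c * \prod_i (w (f i).2 * w (f i).1) else 0).
  by rewrite pair_big; apply: eq_big => -[c f].
rewrite big_bool /= addrC; congr (_ + _).
  rewrite (eq_bigr (fun f : {ffun 'I_n -> bool * bool} => \prod_i (if (f i).1 || (f i).2 then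
     w (f i).2 * w (f i).1 else 0))); last first.
    move=> f _; rewrite mul1r.
    case: (boolP [forall i, _]) => [/forallP H|/forallPn [i Hi]].
      by apply: eq_bigr => i _; rewrite H.
    by rewrite (bigD1 i) //= (negbTE Hi) mul0r.
  rewrite -(bigA_distr_bigA (fun (i : 'I_n) (q : bool * bool) => if q.1 || q.2 then w q.2 * w q.1 else 0)).
  rewrite (eq_bigr (fun _ => 'X *+ 2 + 'X ^+ 2)); last first.
    move=> i _; rewrite (sum_bb (fun a b => if a || b then w b * w a else 0)) /w /=.
    by rewrite mulr1 mul1r addr0 expr2 mulr2n [RHS]addrC addrA.
  by rewrite -[in RHS](card_ord n) -prodr_const.
rewrite -big_distrr /=; congr (_ * _).
rewrite -(bigA_distr_bigA (fun (i : 'I_n) (q : bool * bool) => w q.2 * w q.1)).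
rewrite (eq_bigr (fun _ => (1 + 'X) ^+ 2)); last first.
  move=> i _; rewrite (sum_bb (fun a b => w b * w a)) /w /=.
    by rewrite expr2; ring.
by rewrite exprM -[in RHS](card_ord n) -prodr_const.
Qed.
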